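(* Let $k\geq 3$, $A=\{0,1,\dots,k-1\}$, $n=k-1$, let $T\colon A^{n^2}\to A$ be defined by $T(x_{1,1},\dots,x_{1,n},\dots,x_{n,1},\dots,x_{n,n})=1$ if $x_{i,j}=i$ for all $i,j\in\{1,\dots,n\}$ or $x_{i,j}=j$ for all $i,j\in\{1,\dots,n\}$, and $0$ otherwise, and let $f\colon A^{n}\to A$ be given by $f(\mathbf{x})=1$ if $\mathbf{x}\in\{(1,2,\dots,n),(n,\dots,2,1)\}$ and $f(\mathbf{x})=0$ otherwise. Then $f\in\{T\}^{**}\setminus\langle\{T\}\rangle$.
   Context: $\mathrm{Op}(A)$ denotes the set of all finitary operations $A^m\to A$ with $m\geq1$. An $m$-ary $g$ commutes with an $n$-ary $h$ if for every matrix $(x_{ij})\in A^{m\times n}$, $g\bigl((h((x_{ij})_{j}))_{i}\bigr)=h\bigl((g((x_{ij})_{i}))_{j}\bigr)$. For $F\subseteq\mathrm{Op}(A)$, the centraliser $F^*$ is the set of all $g\in\mathrm{Op}(A)$ commuting with every member of $F$, and $F^{**}=(F^* )^*$ is the bicentraliser. $\langle F\rangle$ denotes the clone generated by $F$ (all term operations of positive arity of the algebra $(A;F)$, including projections). *)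

(* Defs.v *)
From mathcomp Require Import all_boot.
Set Implicit Arguments. Unset Strict Implicit. Unset Printing Implicit Defensive.

(* Membership in Op(A) additionally
   requires 0 < arity (imposed where Op(A) is quantified over). *)
Record op (A : Type) := Op { arity : nat; fn : ('I_arity -> A) -> A }.
Arguments arity {A} o.
Arguments fn {A} o _.

Definition commutes (A : Type) (g h : op A) : Prop :=
  forall x : 'I_(arity g) -> 'I_(arity h) -> A,
    fn g (fun i => fn h (fun j => x i j)) = fn h (fun j => fn g (fun i => x i j)).

Definition in_centraliser (A : Type) (F : op A -> Prop) (g : op A) : Prop :=
  0 < arity g /\ forall h, F h -> commutes g h.

Definition in_bicentraliser (A : Type) (F : op A -> Prop) (g : op A) : Prop :=
  in_centraliser (in_centraliser F) g.

Inductive term_op (A : Type) (F : op A -> Prop) (m : nat) : (('I_m -> A) -> A) -> Prop :=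
| term_proj (i : 'I_m) : term_op F (fun x => x i)
| term_comp (g : op A) (Fg : F g) (ts : 'I_(arity g) -> ('I_m -> A) -> A) :
    (forall j, term_op F (ts j)) ->
    term_op F (fun x => fn g (fun j => ts j x)).

Definition in_clone (A : Type) (F : op A -> Prop) (g : op A) : Prop :=
  0 < arity g /\ exists t, term_op F t /\ forall x, fn g x = t x.

Section Concrete.
Variables (k : nat) (hk : 2 < k).

Definition zeroA : 'I_k := Ordinal (ltn_trans (isT : 0 < 2) hk).
Definition oneA : 'I_k := Ordinal (ltn_trans (isT : 1 < 2) hk).

(* T : A^{n^2} -> A; the argument x_{i,j} (1 <= i,j <= n) sits at the
   0-based position p = (i-1)*n + (j-1), so i = p %/ n + 1, j = p %% n + 1. *)
Definition T_fn (x : 'I_((k.-1) * (k.-1)) -> 'I_k) : 'I_k :=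
  if [forall p, val (x p) == p %/ k.-1 + 1] || [forall p, val (x p) == p %% k.-1 + 1]
  then oneA else zeroA.

Definition T_op : op 'I_k := @Op 'I_k ((k.-1) * (k.-1)) T_fn.

Definition f_fn (x : 'I_(k.-1) -> 'I_k) : 'I_k :=
  if [forall i : 'I_(k.-1), val (x i) == i + 1] || [forall i : 'I_(k.-1), val (x i) == k.-1 - i]
  then oneA else zeroA.

Definition f_op : op 'I_k := @Op 'I_k (k.-1) f_fn.

End Concrete.

(* Main.v *)
Require Import Defs.
From mathcomp Require Import all_boot.
From mathcomp Require Import zify.
From Stdlib Require Import FunctionalExtensionality.
Set Implicit Arguments. Unset Strict Implicit. Unset Printing Implicit Defensive.

Section Main.
Variables (n : nat) (hk : 2 < n.+1).
Local Notation A := 'I_n.+1.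
Local Notation Tf := (@T_fn n.+1 hk).
Local Notation one := (oneA hk).
Local Notation zero := (zeroA hk).

Lemma n_gt1 : 1 < n. Proof. exact: hk. Qed.
Lemma n_gt0 : 0 < n. Proof. exact: ltnW n_gt1. Qed.

Lemma one_zero : one <> zero. Proof. by move/(congr1 val). Qed.

Definition i0 : 'I_n := Ordinal n_gt0.
Definition i1 : 'I_n := Ordinal n_gt1.

Lemma pos_lt (i j : 'I_n) : i * n + j < n * n.
Proof. have := ltn_ord i; have := ltn_ord j; nia. Qed.

Definition pos (i j : 'I_n) : 'I_(n*n) := Ordinal (pos_lt i j).

Lemma div_lt (p : 'I_(n*n)) : p %/ n < n.
Proof. by rewrite ltn_divLR ?n_gt0. Qed.

Definition divord (p : 'I_(n*n)) : 'I_n := Ordinal (div_lt p).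
Definition modord (p : 'I_(n*n)) : 'I_n := Ordinal (ltn_pmod p n_gt0).

Lemma posdivE i j : pos i j %/ n = i.
Proof. by rewrite /= divnMDl ?n_gt0 // divn_small // addn0. Qed.
Lemma posmodE i j : pos i j %% n = j.
Proof. by rewrite /= modnMDl modn_small. Qed.
Lemma pos_div i j : divord (pos i j) = i.
Proof. by apply: val_inj; rewrite /= posdivE. Qed.
Lemma pos_mod i j : modord (pos i j) = j.
Proof. by apply: val_inj; rewrite /= posmodE. Qed.
Lemma pos_surj p : p = pos (divord p) (modord p).
Proof. by apply: val_inj; rewrite /= -divn_eq. Qed.

Lemma T_oneP x : Tf x = one <->
  ((forall i j, val (x (pos i j)) = i.+1) \/ (forall i j, val (x (pos i j)) = j.+1)).
Proof.
rewrite /T_fn; split.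
- case: ifP => [/orP [/forallP H | /forallP H] _ | _ /esym /one_zero //].
  + left => i j; move/eqP: (H (pos i j)); rewrite /= posdivE addn1 //.
  + right => i j; move/eqP: (H (pos i j)); rewrite /= posmodE addn1 //.
- case=> H; case: ifP => // /negP []; apply/orP; [left|right]; apply/forallP => p.
  + move: (H (divord p) (modord p)); rewrite -pos_surj => -> /=; by rewrite addn1.
  + move: (H (divord p) (modord p)); rewrite -pos_surj => -> /=; by rewrite addn1.
Qed.

Lemma T_01 x : Tf x = one \/ Tf x = zero.
Proof. by rewrite /T_fn; case: ifP; auto. Qed.

Lemma T_ne1 x : Tf x <> one -> Tf x = zero.
Proof. by case: (T_01 x). Qed.

Lemma T_const c : Tf (fun _ => c) = zero.
Proof.
apply: T_ne1 => /T_oneP [] H.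
- by have := H i0 i0; have := H i1 i0 => /= ->.
- by have := H i0 i0; have := H i0 i1 => /= ->.
Qed.

Definition Rv (p : 'I_(n*n)) : A := inord (divord p).+1.
Definition Cv (p : 'I_(n*n)) : A := inord (modord p).+1.

Lemma RvE i j : val (Rv (pos i j)) = i.+1.
Proof. by rewrite /Rv pos_div /= inordK // ltnS ltn_ord. Qed.
Lemma CvE i j : val (Cv (pos i j)) = j.+1.
Proof. by rewrite /Cv pos_mod /= inordK // ltnS ltn_ord. Qed.

Lemma T_R : Tf Rv = one.
Proof. by apply/T_oneP; left => i j; rewrite RvE. Qed.
Lemma T_C : Tf Cv = one.
Proof. by apply/T_oneP; right => i j; rewrite CvE. Qed.

Lemma Rv_eq i j j' : Rv (pos i j) = Rv (pos i j').
Proof. by apply: val_inj; rewrite !RvE. Qed.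
Lemma Cv_eq i i' j : Cv (pos i j) = Cv (pos i' j).
Proof. by apply: val_inj; rewrite !CvE. Qed.
Lemma Rv_one j : Rv (pos i0 j) = one.
Proof. by apply: val_inj; rewrite RvE. Qed.
Lemma Cv_one i : Cv (pos i i0) = one.
Proof. by apply: val_inj; rewrite CvE. Qed.

Lemma key (psi : A -> A -> A)
  (H : forall y y', psi (Tf y) (Tf y') = Tf (fun p => psi (y p) (y' p))) :
  psi one one = if (psi one zero == one) || (psi zero one == one) then one else zero.
Proof.
case: ifP.
- case/orP => /eqP h.
  + have := H Rv (fun _ => one); rewrite T_R T_const h => /esym /T_oneP [] K;
    have := K i0 i0; rewrite Rv_one => E; exact: val_inj.
  + have := H (fun _ => one) Cv; rewrite T_C T_const h => /esym /T_oneP [] K;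
    have := K i0 i0; rewrite Cv_one => E; exact: val_inj.
- move/norP => [/eqP h1 /eqP h2].
  rewrite -{1}T_R -{1}T_C H; apply: T_ne1 => /T_oneP [] K.
  + apply: h1; have := H Rv (fun _ => one); rewrite T_R T_const => ->.
    apply/T_oneP; left => i j; have := K i i0; by rewrite Cv_one (Rv_eq i i0 j).
  + apply: h2; have := H (fun _ => one) Cv; rewrite T_C T_const => ->.
    apply/T_oneP; right => i j; have := K i0 j; by rewrite Rv_one (Cv_eq i0 i j).
Qed.

Definition isid (z : 'I_n -> A) : bool := [forall i : 'I_n, val (z i) == i + 1].
Definition isrev (z : 'I_n -> A) : bool := [forall i : 'I_n, val (z i) == n - i].

Lemma fE z : f_fn hk z = if isid z || isrev z then one else zero.
Proof. by []. Qed.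

Lemma Trow z : Tf (fun p => z (divord p)) = if isid z then one else zero.
Proof.
case: ifP => h.
- apply/T_oneP; left => i j; rewrite pos_div; move/forallP: h => /(_ i)/eqP ->; by rewrite addn1.
- apply: T_ne1 => /T_oneP [] K.
  + move/negP: h; apply; apply/forallP => i; have := K i i0; rewrite pos_div addn1 => ->; by [].
  + have := K i0 i0; have := K i0 i1; rewrite !pos_div => -> //.
Qed.

Lemma Tcol z : Tf (fun p => z (rev_ord (modord p))) = if isrev z then one else zero.
Proof.
case: ifP => h.
- apply/T_oneP; right => i j; rewrite pos_mod; move/forallP: h => /(_ (rev_ord j))/eqP ->.
  by rewrite /= subKn // ltn_ord.
- apply: T_ne1 => /T_oneP [] K.
  + have := K i0 i0; have := K i1 i0; rewrite !pos_mod => -> //.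
  + move/negP: h; apply; apply/forallP => i; have := K i0 (rev_ord i).
    rewrite pos_mod rev_ordK => -> /=; by rewrite subnSK.
Qed.

Lemma comm_fg (g : op A)
  (Hg : forall X : 'I_(arity g) -> 'I_(n*n) -> A,
      fn g (fun i => Tf (X i)) = Tf (fun p => fn g (fun i => X i p)))
  (x : 'I_n -> 'I_(arity g) -> A) :
  f_fn hk (fun i => fn g (x i)) = fn g (fun r => f_fn hk (fun i => x i r)).
Proof.
pose a r := isid (fun i => x i r).
pose b r := isrev (fun i => x i r).
pose v (c d : A) := fun r => if a r then c else if b r then d else zero.
pose psi c d := fn g (v c d).
have Hpsi : forall y y', psi (Tf y) (Tf y') = Tf (fun p => psi (y p) (y' p)).
  move=> y y'; have E := Hg (fun r p => if a r then y p else if b r then y' p else zero).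
  rewrite /psi; etransitivity; last exact: E.
  congr (fn g _); apply: functional_extensionality => r; rewrite /v.
  by case: (a r); case: (b r); rewrite ?T_const.
have e11 : fn g (fun r => f_fn hk (fun i => x i r)) = psi one one.
  rewrite /psi; congr (fn g _); apply: functional_extensionality => r.
  rewrite fE /v /a /b; by case: (isid _); case: (isrev _).
have e10 : psi one zero = if isid (fun i => fn g (x i)) then one else zero.
  rewrite -(Trow (fun i => fn g (x i))).
  have E := Hg (fun r p => x (divord p) r).
  rewrite /psi; etransitivity; last exact: E.
  congr (fn g _); apply: functional_extensionality => r.
  rewrite (Trow (fun i => x i r)) /v /a /b; by case: ifP => //; case: ifP.
have e01 : psi zero one = if isrev (fun i => fn g (x i)) then one else zero.
  rewrite -(Tcol (fun i => fn g (x i))).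
  have E := Hg (fun r p => x (rev_ord (modord p)) r).
  rewrite /psi; etransitivity; last exact: E.
  congr (fn g _); apply: functional_extensionality => r.
  rewrite (Tcol (fun i => x i r)) /v /a /b.
  case: ifP => //= hi; case: ifP => //= hr.
  exfalso; move/forallP: hi => /(_ i0) /eqP; move/forallP: hr => /(_ i0) /eqP /= ->.
  rewrite subn0 add0n => E1; have := n_gt1; by rewrite E1.
rewrite e11 (key Hpsi) e10 e01 fE.
by case: (isid _); case: (isrev _).
Qed.

Definition id_in (j : 'I_n) : A := inord j.+1.
Definition rev_in (j : 'I_n) : A := inord (n - j).

Lemma val_id_in j : val (id_in j) = j.+1.
Proof. by rewrite /id_in /= inordK // ltnS ltn_ord. Qed.
Lemma val_rev_in j : val (rev_in j) = n - j.
Proof. by rewrite /rev_in /= inordK // ltnS leq_subr. Qed.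

Lemma f_id : f_fn hk id_in = one.
Proof. rewrite fE; case: ifP => // /negP []; apply/orP; left; apply/forallP => i.
by rewrite val_id_in addn1. Qed.
Lemma f_rev : f_fn hk rev_in = one.
Proof. rewrite fE; case: ifP => // /negP []; apply/orP; right; apply/forallP => i.
by rewrite val_rev_in. Qed.

Lemma term_cases m (t : ('I_m -> A) -> A) :
  term_op (fun h => h = T_op hk) t ->
  (exists i, forall x, t x = x i) \/ (forall x, val (t x) <= 1).
Proof.
case=> [i | g Fg ts _]; first by left; exists i.
right; subst g => y /=; rewrite /T_fn; by case: ifP.
Qed.

Lemma not_clone : ~ in_clone (fun h => h = T_op hk) (f_op hk).
Proof.
move=> [_ [t [Ht Hf]]].
have hid := Hf id_in; have hrev := Hf rev_in.
rewrite /= f_id in hid; rewrite /= f_rev in hrev.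
case: Ht hid hrev => [i | g Fg ts Hts].
  move=> /(congr1 val); rewrite val_id_in /= => -[] h1.
  move=> /(congr1 val); rewrite val_rev_in /= => h2.
  have := n_gt1; lia.
subst g => /= /esym hid /esym hrev.
have P : forall p, 2 <= val (ts p id_in) -> val (ts p rev_in) = n.+1 - val (ts p id_in).
  move=> p; case: (term_cases (Hts p)) => [[i Hi] | Hv]; last by rewrite leqNgt ltnS Hv.
  by rewrite !Hi val_id_in val_rev_in subSS.
have hl : n.-1 < n by rewrite ltn_predL n_gt0.
pose last : 'I_n := Ordinal hl.
have n1 := n_gt1.
case/T_oneP: hid => K; case/T_oneP: hrev => K'.
- have := P (pos last i0); rewrite K K' /=. move=> E; have := E ltac:(lia); lia.
- have := P (pos i1 i0); have := P (pos i1 i1); rewrite !K !K' /=.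
  move=> E1 E2; have := E1 ltac:(lia); have := E2 ltac:(lia); lia.
- have := P (pos i0 i1); have := P (pos i1 i1); rewrite !K !K' /=.
  move=> E1 E2; have := E1 ltac:(lia); have := E2 ltac:(lia); lia.
- have := P (pos i0 last); rewrite K K' /=. move=> E; have := E ltac:(lia); lia.
Qed.

End Main.

Theorem corollary3p14 (k : nat) (hk : 2 < k) :
  in_bicentraliser (fun h => h = T_op hk) (f_op hk) /\
  ~ in_clone (fun h => h = T_op hk) (f_op hk).
Proof.
case: k hk => [//|n] hk; split; last exact: not_clone.
split; first exact: (n_gt0 hk).
move=> g [_ Hg]; have Hg' := Hg (T_op hk) erefl.
move=> x; exact: (comm_fg Hg').
Qed.
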